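(* Let $N\ge 2$, let $s=(s_1,\dots,s_{N-1})\in\mathbb{C}^{N-1}$ be generic, and set $x_a=2s_a-2s_{a-1}$ for $1\le a\le N$, with $s_0=s_N=0$. Define $$F(s)=\mathbb{1}\otimes\mathbb{1}-\sum_{1\le a<b\le N}\frac{2}{x_a-x_b}\,E_{ab}\otimes E_{ba}\in \mathrm{End}(\mathbb{C}^N)^{\otimes 2},$$ and $R(s)=F_{21}(s)\,F_{12}(s)^{-1}$, where $F_{21}=PF_{12}P$ with $P$ the permutation of the two tensor factors. Then, writing $R(s)=\sum R_{i_1i_2}^{j_1j_2}E_{i_1j_1}\otimes E_{i_2j_2}$, the non-vanishing entries of $R(s)$ are, for $1\le a, b\le N$ with $a\neq b$ in the last two lines, $$R_{aa}^{aa}=1,\qquad R_{ab}^{ab}=\begin{cases}1 & b>a,\\ 1-\dfrac{4}{(x_a-x_b)^2} & b<a,\end{cases}\qquad R_{ab}^{ba}=\frac{2}{x_a-x_b},$$ and $R(s)$ satisfies the dynamical Yang--Baxter equation $$R_{12}(s+h^{(3)})\,R_{13}(s)\,R_{23}(s+h^{(1)})=R_{23}(s)\,R_{13}(s+h^{(2)})\,R_{12}(s)$$ in $\mathrm{End}(\mathbb{C}^N)^{\otimes 3}$.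
   Context: $E_{ab}$ denotes the $N\times N$ elementary matrix with entry $1$ in position $(a,b)$ and $0$ elsewhere; $R_{12},R_{13},R_{23}$ denote $R$ acting on the indicated factors of $(\mathbb{C}^N)^{\otimes 3}$. The shift notation: let $h_j=E_{jj}-E_{j+1,j+1}$ ($1\le j\le N-1$) be the Cartan generators of $sl_N$ in the fundamental representation, $(d_{ij})$ the inverse of the Cartan matrix of $sl_N$, and $h^\vee_i=\sum_j d_{ij}h_j$. Then $R_{12}(s+h^{(3)})$ means the operator obtained by replacing each $s_i$ in $R_{12}(s)$ by $s_i+h^\vee_i$ acting in the third tensor factor (these are diagonal, so this is well defined: on $v_{i_1}\otimes v_{i_2}\otimes v_c$ one substitutes the eigenvalue of $h^\vee_i$ on $v_c$); similarly for $h^{(1)}$, $h^{(2)}$. *)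

(* Defs.v *)
From HB Require Import structures.
From mathcomp Require Import all_boot all_order all_algebra.
From mathcomp Require Import reals complex.
Set Implicit Arguments. Unset Strict Implicit. Unset Printing Implicit Defensive.
Import Order.TTheory GRing.Theory Num.Theory.
Local Open Scope ring_scope.

Section DYBE.
Variable C : fieldType.
Variable N : nat.

(* Operators on (C^N)^{(x)2} and (C^N)^{(x)3}: the basis vector
   v_{i1} (x) v_{i2} is indexed by mxvec_index i1 i2, and
   v_{i1} (x) v_{i2} (x) v_{i3} by mxvec_index (mxvec_index i1 i2) i3. *)
Definition Op2 := 'M[C]_(N * N).
Definition Op3 := 'M[C]_(N * N * N).

Definition dec (m n : nat) (k : 'I_(m * n)) : 'I_m * 'I_n :=
  enum_val (cast_ord (esym (mxvec_cast m n)) k).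

Definition dec3 (k : 'I_(N * N * N)) : 'I_N * 'I_N * 'I_N :=
  let p := dec k in (dec p.1, p.2).

Definition mk2 (f : 'I_N -> 'I_N -> 'I_N -> 'I_N -> C) : Op2 :=
  \matrix_(I, J) f (dec I).1 (dec I).2 (dec J).1 (dec J).2.

Definition mk3 (f : 'I_N -> 'I_N -> 'I_N -> 'I_N -> 'I_N -> 'I_N -> C) : Op3 :=
  \matrix_(I, J) f (dec3 I).1.1 (dec3 I).1.2 (dec3 I).2
                   (dec3 J).1.1 (dec3 J).1.2 (dec3 J).2.

(* entry R_{i1 i2}^{j1 j2}: coefficient of E_{i1 j1} (x) E_{i2 j2} *)
Definition ent2 (A : Op2) (i1 i2 j1 j2 : 'I_N) : C :=
  A (mxvec_index i1 i2) (mxvec_index j1 j2).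

Definition tens (A B : 'M[C]_N) : Op2 :=
  mk2 (fun i1 i2 j1 j2 => A i1 j1 * B i2 j2).

Definition E (a b : 'I_N) : 'M[C]_N := delta_mx a b.

Definition Pflip : Op2 :=
  mk2 (fun i1 i2 j1 j2 => ((i1 == j2) && (i2 == j1))%:R).

(* s = (s_1,...,s_{N-1}) is s : 'I_(N.-1) -> C, s_k = s (k-1);
   sext s k = s_k for 1 <= k <= N-1 and s_0 = s_N = 0. *)
Definition sext (s : 'I_(N.-1) -> C) (k : nat) : C :=
  if k is k'.+1 then (if insub k' is Some i then s i else 0) else 0.

(* x_a = 2 s_a - 2 s_{a-1}, for a : 'I_N standing for the 1-based a+1 *)
Definition xcoord (s : 'I_(N.-1) -> C) (a : 'I_N) : C :=
  2 * sext s a.+1 - 2 * sext s a.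

Definition Fmat (s : 'I_(N.-1) -> C) : Op2 :=
  1%:M - \sum_(a < N) \sum_(b < N | (a < b)%N)
           (2 / (xcoord s a - xcoord s b)) *: tens (E a b) (E b a).

Definition F21 (s : 'I_(N.-1) -> C) : Op2 := Pflip *m Fmat s *m Pflip.

Definition Rmat (s : 'I_(N.-1) -> C) : Op2 := F21 s *m invmx (Fmat s).

Definition cartan : 'M[C]_(N.-1) :=
  \matrix_(i, j) (if i == j then 2
                  else if (i.+1 == j :> nat) || (j.+1 == i :> nat) then -1
                  else 0).

Definition dinv : 'M[C]_(N.-1) := invmx cartan.

(* eigenvalue of h_j = E_{jj} - E_{j+1,j+1} (1-based j) on v_c *)
Definition hval (j : 'I_(N.-1)) (c : 'I_N) : C :=
  (c == j :> nat)%:R - (c == j.+1 :> nat)%:R.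

Definition hvee (i : 'I_(N.-1)) (c : 'I_N) : C :=
  \sum_(j < N.-1) dinv i j * hval j c.

(* s + h^vee evaluated on v_c *)
Definition shift (s : 'I_(N.-1) -> C) (c : 'I_N) : 'I_(N.-1) -> C :=
  fun i => s i + hvee i c.

Definition R12 (s : 'I_(N.-1) -> C) : Op3 :=
  mk3 (fun i1 i2 i3 j1 j2 j3 => ent2 (Rmat s) i1 i2 j1 j2 * (i3 == j3)%:R).
Definition R13 (s : 'I_(N.-1) -> C) : Op3 :=
  mk3 (fun i1 i2 i3 j1 j2 j3 => ent2 (Rmat s) i1 i3 j1 j3 * (i2 == j2)%:R).
Definition R23 (s : 'I_(N.-1) -> C) : Op3 :=
  mk3 (fun i1 i2 i3 j1 j2 j3 => ent2 (Rmat s) i2 i3 j2 j3 * (i1 == j1)%:R).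

Definition R12_h3 (s : 'I_(N.-1) -> C) : Op3 :=
  mk3 (fun i1 i2 i3 j1 j2 j3 =>
         ent2 (Rmat (shift s i3)) i1 i2 j1 j2 * (i3 == j3)%:R).
Definition R13_h2 (s : 'I_(N.-1) -> C) : Op3 :=
  mk3 (fun i1 i2 i3 j1 j2 j3 =>
         ent2 (Rmat (shift s i2)) i1 i3 j1 j3 * (i2 == j2)%:R).
Definition R23_h1 (s : 'I_(N.-1) -> C) : Op3 :=
  mk3 (fun i1 i2 i3 j1 j2 j3 =>
         ent2 (Rmat (shift s i1)) i2 i3 j2 j3 * (i1 == j1)%:R).

Definition xdistinct (s : 'I_(N.-1) -> C) : Prop :=
  forall a b : 'I_N, a != b -> xcoord s a != xcoord s b.

(* genericity used in the theorem: R(s) and all shifted R(s + h^{(c)})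
   that occur are defined *)
Definition generic (s : 'I_(N.-1) -> C) : Prop :=
  xdistinct s /\ forall c : 'I_N, xdistinct (shift s c).

End DYBE.

(* Main.v *)
Require Import Defs.
From HB Require Import structures.
From mathcomp Require Import all_boot all_order all_algebra.
From mathcomp Require Import reals complex.
From mathcomp Require Import ring zify.
Import Order.TTheory GRing.Theory Num.Theory.
Local Open Scope ring_scope.

Ltac bsimp := rewrite ?(eqxx, ltnn, andbT, andbF, andTb, andFb, orbT, orbF, orTb, orFb) /=.
Ltac bcase := repeat (bsimp; match goal with
 | H : (?a == ?b) = false |- context [?b == ?a] => rewrite (eq_sym b a) H
 | H : (?a == ?b) = false |- context [?a == ?b] => rewrite H
 | |- context [(?a == ?b)] => is_var a; is_var b;
      case: (a =P b) => [?|/eqP/negbTE ?]; [subst|]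
 end).

Ltac fin := bsimp; try done; try (move=> _); rewrite /= ?(mulr1, mul1r, mulr0, mul0r, addr0, add0r, subr0, subrr) //; try ring.

Ltac lia_bool := repeat match goal with
 | |- context [(?a == ?b :> nat)] =>
     first [ have -> : (a == b :> nat) = true by (simpl in *; lia)
           | have -> : (a == b :> nat) = false by (simpl in *; lia) ]
 | |- context [(?a <= ?b)%N] =>
     first [ have -> : (a <= b)%N = true by (simpl in *; lia)
           | have -> : (a <= b)%N = false by (simpl in *; lia) ]
 | |- context [minn ?a ?b] =>
     first [ have -> : minn a b = a by (simpl in *; lia)
           | have -> : minn a b = b by (simpl in *; lia) ]
 end.

Ltac ord_bool := repeat match goal with
 | |- context [(?a == ?a)] => rewrite eqxx
 | |- context [(?a == ?b)] =>
     have -> : (a == b) = false by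
       (apply/eqP => E; move: E => /(congr1 val) /=; lia)
 end.


Section Infra.
Variable C : fieldType.

Lemma dec_mxvec m n (i : 'I_m) (j : 'I_n) : dec (mxvec_index i j) = (i, j).
Proof. by rewrite /dec /mxvec_index cast_ordK enum_rankK. Qed.

Lemma sum_mxvec m n (f : 'I_(m * n) -> C) :
  \sum_K f K = \sum_i \sum_j f (mxvec_index i j).
Proof.
rewrite pair_big /= (reindex (uncurry (@mxvec_index m n))) /=.
  by apply: eq_bigr => -[i j].
exact: curry_mxvec_bij.
Qed.

Variable N : nat.
Definition ent3 (A : Op3 C N) (i1 i2 i3 j1 j2 j3 : 'I_N) : C :=
  A (mxvec_index (mxvec_index i1 i2) i3) (mxvec_index (mxvec_index j1 j2) j3).

Lemma ent2_mk2 (f : 'I_N -> 'I_N -> 'I_N -> 'I_N -> C) i1 i2 j1 j2 : ent2 (mk2 f) i1 i2 j1 j2 = f i1 i2 j1 j2 :> C.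
Proof. by rewrite /ent2 /mk2 mxE !dec_mxvec. Qed.

Lemma ent3_mk3 (f : 'I_N -> 'I_N -> 'I_N -> 'I_N -> 'I_N -> 'I_N -> C) i1 i2 i3 j1 j2 j3 :
  ent3 (mk3 f) i1 i2 i3 j1 j2 j3 = f i1 i2 i3 j1 j2 j3 :> C.
Proof. by rewrite /ent3 /mk3 mxE /dec3 !dec_mxvec. Qed.

Lemma ent2_mul (A B : Op2 C N) i1 i2 j1 j2 :
  ent2 (A *m B) i1 i2 j1 j2 =
  \sum_k1 \sum_k2 ent2 A i1 i2 k1 k2 * ent2 B k1 k2 j1 j2.
Proof. by rewrite /ent2 mxE sum_mxvec. Qed.

Lemma ent3_mul (A B : Op3 C N) i1 i2 i3 j1 j2 j3 :
  ent3 (A *m B) i1 i2 i3 j1 j2 j3 =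
  \sum_k1 \sum_k2 \sum_k3 ent3 A i1 i2 i3 k1 k2 k3 * ent3 B k1 k2 k3 j1 j2 j3.
Proof.
by rewrite /ent3 mxE sum_mxvec sum_mxvec.
Qed.

Lemma ent2_ext (A B : Op2 C N) :
  (forall i1 i2 j1 j2, ent2 A i1 i2 j1 j2 = ent2 B i1 i2 j1 j2) -> A = B.
Proof.
move=> H; apply/matrixP => I J.
case/mxvec_indexP: I => i1 i2; case/mxvec_indexP: J => j1 j2; exact: H.
Qed.

Lemma ent3_ext (A B : Op3 C N) :
  (forall i1 i2 i3 j1 j2 j3,
     ent3 A i1 i2 i3 j1 j2 j3 = ent3 B i1 i2 i3 j1 j2 j3) -> A = B.
Proof.
move=> H; apply/matrixP => I J.
case/mxvec_indexP: I => I i3; case/mxvec_indexP: I => i1 i2.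
case/mxvec_indexP: J => J j3; case/mxvec_indexP: J => j1 j2; exact: H.
Qed.

Lemma sum_delta (a : 'I_N) (g : 'I_N -> C) :
  \sum_k (k == a)%:R * g k = g a.
Proof.
rewrite (bigD1 a) //= eqxx mul1r big1 ?addr0 // => k /negbTE ->; by rewrite mul0r.
Qed.

End Infra.
Arguments ent3 {C N} A i1 i2 i3 j1 j2 j3.



Section Fsec.
Variable C : fieldType.
Variable N : nat.
Implicit Types (a b : 'I_N) (s : 'I_(N.-1) -> C).

Lemma sum_single (a : 'I_N) (g : 'I_N -> C) :
  (forall k, k != a -> g k = 0) -> \sum_k g k = g a.
Proof. by move=> H; rewrite (bigD1 a) //= big1 ?addr0. Qed.

Lemma sum_single2 (a1 a2 : 'I_N) (g : 'I_N -> 'I_N -> C) :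
  (forall k1 k2, ~~ ((k1 == a1) && (k2 == a2)) -> g k1 k2 = 0) ->
  \sum_k1 \sum_k2 g k1 k2 = g a1 a2.
Proof.
move=> H; rewrite (sum_single a1) => [|k Hk].
  by apply: sum_single => k Hk; apply: H; rewrite (negbTE Hk) andbF.
by apply: big1 => l _; apply: H; rewrite (negbTE Hk).
Qed.

Lemma natr_and (p q : bool) : ((p && q)%:R : C) = p%:R * q%:R.
Proof. by case: p; case: q; rewrite ?mul0r ?mul1r. Qed.

Definition cc (s : 'I_(N.-1) -> C) a b : C := 2 / (xcoord s a - xcoord s b).
Definition alpha (s : 'I_(N.-1) -> C) a b : C :=
  if (a < b)%N then 1 else 1 - 4 / (xcoord s a - xcoord s b) ^+ 2.
Definition beta (s : 'I_(N.-1) -> C) a b : C := 2 / (xcoord s a - xcoord s b).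

Lemma mxvec_eq (i1 i2 j1 j2 : 'I_N) :
  (mxvec_index i1 i2 == mxvec_index j1 j2) = ((i1 == j1) && (i2 == j2)).
Proof.
have canc : cancel (uncurry (@mxvec_index N N)) (@dec N N).
  by move=> [i j]; rewrite /= dec_mxvec.
by move: (can_eq canc (i1, i2) (j1, j2)) => /= ->.
Qed.

Lemma ent2_1 i1 i2 j1 j2 :
  ent2 (1%:M : Op2 C N) i1 i2 j1 j2 = ((i1 == j1) && (i2 == j2))%:R.
Proof. by rewrite /ent2 mxE mxvec_eq. Qed.

Lemma Fent s i1 i2 j1 j2 :
  ent2 (Fmat s) i1 i2 j1 j2 = ((i1 == j1) && (i2 == j2))%:R
     - ((i1 < i2)%N && (j1 == i2) && (j2 == i1))%:R * cc s i1 i2.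
Proof.
rewrite /Fmat {1}/ent2 !mxE mxvec_eq; congr (_ - _).
rewrite summxE (sum_single i1) => [|a Ha].
  rewrite summxE big_mkcond /= (sum_single i2) => [|b Hb].
    rewrite !mxE !dec_mxvec /cc /=; case: (i1 < i2)%N; bcase; fin.
  rewrite !mxE !dec_mxvec /=; case: ifP => // _.
  rewrite [i2 == b]eq_sym (negbTE Hb) andFb; fin.
rewrite summxE big1 // => b _; rewrite !mxE !dec_mxvec /=.
rewrite [i1 == a]eq_sym (negbTE Ha) andFb; fin.
Qed.


Definition Gmat (s : 'I_(N.-1) -> C) : Op2 C N :=
  mk2 (fun i1 i2 j1 j2 => ((i1 == j1) && (i2 == j2))%:R
     + ((i1 < i2)%N && (j1 == i2) && (j2 == i1))%:R * cc s i1 i2).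

Lemma FG s : Fmat s *m Gmat s = 1%:M.
Proof.
apply: ent2_ext => i1 i2 j1 j2; rewrite ent2_mul ent2_1.
under eq_bigr do under eq_bigr do rewrite Fent ent2_mk2 mulrBl.
under eq_bigr do rewrite sumrB.
rewrite sumrB (sum_single2 i1 i2) => [|k1 k2]; last by bcase; fin.
rewrite (sum_single2 i2 i1) => [|k1 k2]; last by bcase; fin.
rewrite !eqxx /=.
case: (ltngtP i1 i2) => H; bcase; fin.
Qed.


Lemma invF s : invmx (Fmat s) = Gmat s.
Proof.
have [uF _] := mulmx1_unit (FG s).
by rewrite -[invmx _]mulmx1 -(FG s) mulmxA mulVmx // mul1mx.
Qed.

Lemma Pent (i1 i2 j1 j2 : 'I_N) :
  ent2 (Pflip C N) i1 i2 j1 j2 = ((i1 == j2) && (i2 == j1))%:R.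
Proof. by rewrite ent2_mk2. Qed.

Lemma F21ent s (i1 i2 j1 j2 : 'I_N) :
  ent2 (F21 s) i1 i2 j1 j2 = ent2 (Fmat s) i2 i1 j2 j1.
Proof.
rewrite /F21 ent2_mul.
under eq_bigr do under eq_bigr do rewrite Pent.
rewrite (sum_single2 j2 j1) => [|k1 k2]; last by bcase; fin.
rewrite ent2_mul; under eq_bigr do under eq_bigr do rewrite Pent.
rewrite (sum_single2 i2 i1) => [|k1 k2]; last by bcase; fin.
by bcase; fin.
Qed.

Lemma Rent s (i1 i2 j1 j2 : 'I_N) :
  ent2 (Rmat s) i1 i2 j1 j2 = alpha s i1 i2 * ((j1 == i1) && (j2 == i2))%:R
     + beta s i1 i2 * ((j1 == i2) && (j2 == i1))%:R.
Proof.
rewrite /Rmat invF ent2_mul.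
under eq_bigr do under eq_bigr do rewrite F21ent Fent ent2_mk2 mulrBl.
under eq_bigr do rewrite sumrB.
rewrite sumrB (sum_single2 i1 i2) => [|k1 k2]; last by bcase; fin.
rewrite (sum_single2 i2 i1) => [|k1 k2]; last by bcase; fin.
rewrite /alpha /beta /cc.
case: (ltngtP i1 i2) => [H|H|/val_inj H]; try subst; bcase; fin; try (exfalso; lia);
  rewrite ?subrr ?expr0n ?invr0 ?mulr0 ?subr0 ?oppr0 //; try ring.
all: have e1 : forall a b : C, 2 / (b - a) = - (2 / (a - b))
  by move=> a b; rewrite -opprB invrN mulrN.
all: have e2 : forall a b : C, 4 / (a - b) ^+ 2 = (2 / (a - b)) ^+ 2
  by move=> a b; rewrite exprMn exprVn; congr (_ * _); ring.
all: match goal with |- context [2 / (xcoord ?s ?b - xcoord ?s ?a)] =>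
  match goal with |- context [(xcoord s a - xcoord s b)] =>
    rewrite (e1 (xcoord s a) (xcoord s b)) end end.
all: rewrite ?e2; ring.
Qed.

End Fsec.
Arguments cc {C N} s a b.
Arguments alpha {C N} s a b.
Arguments beta {C N} s a b.

Section Csec.
Variable C : fieldType.
Hypothesis char0 : forall n : nat, (n.+1)%:R != 0 :> C.

Lemma sum_nat_delta n m (f : nat -> C) :
  \sum_(k < n) ((k : nat) == m)%:R * f k = (m < n)%N%:R * f m.
Proof.
elim: n => [|n IH]; first by rewrite big_ord0 mul0r.
rewrite big_ord_recr /= IH.
case: (ltngtP m n) => H /=.
- have -> : (m < n.+1)%N = true by lia.
  rewrite ?mulr0n ?mulr1n; ring.
- have -> : (m < n.+1)%N = false by lia.
  rewrite ?mulr0n ?mulr1n; ring.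
- have -> : (m < n.+1)%N = true by lia.
  rewrite H ?mulr0n ?mulr1n; ring.
Qed.


Variable n : nat.
Local Notation N := n.+2.

Lemma cartan_ent (i k : 'I_(N.-1)) :
  cartan C N i k = ((k : nat) == i)%:R * 2 - ((k : nat) == i.-1)%:R * (0 < i)%N%:R
     - ((k : nat) == i.+1)%:R.
Proof.
rewrite mxE -val_eqE /=.
case: (ltngtP k i) => H; [case: (k.+1 =P i) | case: (i.+1 =P k) | case: (ltnP 0 i)] => *;
  lia_bool; rewrite /= ?mulr0n ?mulr1n; ring.
Qed.


Definition Df (j k : nat) : C := (minn k.+1 j.+1)%:R - (k.+1 * j.+1)%:R / N%:R.
Definition Dm : 'M[C]_(N.-1) := \matrix_(i, j) Df j i.

Lemma cartanD : cartan C N *m Dm = 1%:M.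
Proof.
apply/matrixP => i j; rewrite !mxE.
under eq_bigr do rewrite cartan_ent mxE !mulrBl -!mulrA.
rewrite !sumrB (sum_nat_delta _ _ (fun k => 2 * Df j k))
  (sum_nat_delta _ _ (fun k => (0 < i)%N%:R * Df j k)) (sum_nat_delta _ _ (Df j)).
have hi := ltn_ord i; have hj := ltn_ord j.
have hN : (n%:R + 1 + 1 : C) != 0 by rewrite !natr1; exact: char0.
rewrite /Df -val_eqE /=.
case: (ltngtP i j) => H; case: (ltnP 0 i) => Hi0; case: (ltnP i.+1 n.+1) => Hi1;
  lia_bool; rewrite /= ?mulr0n ?mulr1n ?mul0r ?mulr0 ?subr0 ?mul1r.
all: try (exfalso; lia).
all: rewrite ?prednK //; try lia.
all: try (have Ei : nat_of_ord i = n by lia); try (rewrite Ei).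
all: try (have Ei : nat_of_ord i = 0%N by lia); try (rewrite Ei).
all: try (have Ej : nat_of_ord j = n by lia); try (rewrite Ej).
all: try (have Ej : nat_of_ord j = 0%N by lia); try (rewrite Ej).
all: try (rewrite H).
all: rewrite ?natrM -?natr1 ?natrM ?natrD.
all: try (have En : n = 0%N by lia); try (rewrite En). all: field; rewrite ?natr1; exact: char0.

Qed.

Lemma cartan_unit : cartan C N \in unitmx.
Proof. by case: (mulmx1_unit cartanD). Qed.

Implicit Types (s w : 'I_(N.-1) -> C).

Lemma sextD s w k : sext (fun i => s i + w i) k = sext s k + sext w k.
Proof. by case: k => [|k] /=; [rewrite addr0 | case: insub => [i|]; rewrite ?addr0]. Qed.

Lemma xcoordD s w (a : 'I_N) :
  xcoord (fun i => s i + w i) a = xcoord s a + xcoord w a.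
Proof. rewrite /xcoord !sextD; ring. Qed.

Lemma sum_ins w (m : nat) :
  \sum_i w i * ((m == i :> nat))%:R = sext w m.+1.
Proof.
rewrite /sext; case: insubP => [i0 _ Hi0 | Hm].
  rewrite (bigD1 i0) //= Hi0 eqxx big1 => [|k Hk]; first by rewrite addr0 mulr1.
  have -> : (m == k :> nat) = false; last by rewrite mulr0.
  apply/eqP => E; move/eqP: Hk; apply; apply: val_inj => /=; by rewrite -E -Hi0.
rewrite big1 // => k _; rewrite (_ : (m == k :> nat) = false) ?mulr0 //.
have := ltn_ord k; move: Hm; clear; lia.
Qed.

Lemma sum_ins2 w (m : nat) :
  \sum_i w i * ((m == (i : nat).+1 :> nat))%:R = sext w m.
Proof.
case: m => [|m]; last by rewrite -sum_ins; apply: eq_bigr => i _; rewrite eqSS.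
by rewrite big1 // => i _; rewrite mulr0.
Qed.

Definition Mn (a : nat) (c : 'I_N) : C :=
  \sum_i hvee C i c * ((a == i :> nat)%:R - (a == (i : nat).+1 :> nat)%:R).

Lemma xcoord_hvee (c a : 'I_N) : xcoord (fun i => hvee C i c) a = 2 * Mn a c.
Proof.
rewrite /xcoord /Mn -sum_ins -sum_ins2 -mulrBr -sumrB.
by congr (_ * _); apply: eq_bigr => i _; rewrite mulrBr.
Qed.

Lemma Mn_step (c : 'I_N) (i0 : 'I_(N.-1)) :
  Mn i0 c - Mn (i0 : nat).+1 c = (c == i0 :> nat)%:R - (c == (i0 : nat).+1 :> nat)%:R.
Proof.
rewrite /Mn -sumrB.
transitivity (\sum_i hvee C i c * cartan C N i0 i).
  apply: eq_bigr => i _; rewrite -mulrBr cartan_ent; congr (_ * _).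
  have := ltn_ord i; have := ltn_ord i0.
  case: (ltngtP i i0) => H; [case: (i.+1 =P i0) | case: (i0.+1 =P i) | case: (ltnP 0 i0)] => *;
    lia_bool; rewrite /= ?mulr0n ?mulr1n; ring.
rewrite /hvee.
under eq_bigr do rewrite mulr_suml.
rewrite exchange_big /=.
transitivity (\sum_j (cartan C N *m dinv C N) i0 j * hval C j c).
  apply: eq_bigr => j _; rewrite mxE mulr_suml; apply: eq_bigr => i _; ring.
rewrite /dinv mulmxV ?cartan_unit //.
rewrite (bigD1 i0) //= big1 => [|j Hj]; last by rewrite mxE eq_sym (negbTE Hj) mul0r.
by rewrite mxE eqxx addr0 mul1r /hval.
Qed.

Lemma Mn_const (c : 'I_N) (a : nat) : (a < N)%N ->
  Mn a c - (c == a :> nat)%:R = Mn 0 c - (c == 0%N :> nat)%:R.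
Proof.
elim: a => [//|a IH] Ha.
have Ha' : (a < N.-1)%N by lia.
rewrite -IH; last lia.
have := Mn_step c (Ordinal Ha') => /= E.
apply/eqP; rewrite -subr_eq0; apply/eqP.
rewrite (_ : Mn a.+1 c = Mn a c - ((c == a :> nat)%:R - (c == a.+1 :> nat)%:R)); first ring.
rewrite -E; ring.
Qed.

Lemma xdiff s (c a b : 'I_N) :
  xcoord (shift s c) a - xcoord (shift s c) b
  = xcoord s a - xcoord s b + 2 * (a == c)%:R - 2 * (b == c)%:R.
Proof.
rewrite /shift !xcoordD !xcoord_hvee.
have Ea := Mn_const c _ (ltn_ord a); have Eb := Mn_const c _ (ltn_ord b).
rewrite (_ : Mn a c = Mn b c + (c == a :> nat)%:R - (c == b :> nat)%:R).
  rewrite -!val_eqE /= [(a : nat) == c]eq_sym [(b : nat) == c]eq_sym; ring.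
apply/eqP; rewrite -subr_eq0; apply/eqP.
rewrite (_ : Mn a c = Mn 0 c - (c == 0%N :> nat)%:R + (c == a :> nat)%:R); last by rewrite -Ea; ring.
rewrite (_ : Mn b c = Mn 0 c - (c == 0%N :> nat)%:R + (c == b :> nat)%:R); last by rewrite -Eb; ring.
ring.
Qed.

End Csec.

Section Dsec.
Variable C : fieldType.
Variable N : nat.
Implicit Types (s : 'I_(N.-1) -> C).

Definition ind3 (a1 a2 a3 k1 k2 k3 : 'I_N) : C :=
  ((k1 == a1) && (k2 == a2) && (k3 == a3))%:R.

Lemma sum3_ind (a1 a2 a3 : 'I_N) (F : 'I_N -> 'I_N -> 'I_N -> C) :
  \sum_k1 \sum_k2 \sum_k3 ind3 a1 a2 a3 k1 k2 k3 * F k1 k2 k3 = F a1 a2 a3.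
Proof.
rewrite /ind3.
under eq_bigr do under eq_bigr do under eq_bigr do rewrite !natr_and -!mulrA.
under eq_bigr do under eq_bigr do rewrite -mulr_sumr.
under eq_bigr do rewrite -mulr_sumr.
rewrite sum_delta; under eq_bigr do rewrite -mulr_sumr.
by rewrite sum_delta sum_delta. Qed.

Lemma act3 (p q : C) (a1 a2 a3 b1 b2 b3 : 'I_N) (F : 'I_N -> 'I_N -> 'I_N -> C) :
  \sum_k1 \sum_k2 \sum_k3 (p * ind3 a1 a2 a3 k1 k2 k3 + q * ind3 b1 b2 b3 k1 k2 k3)
     * F k1 k2 k3 = p * F a1 a2 a3 + q * F b1 b2 b3.
Proof.
under eq_bigr do under eq_bigr do under eq_bigr do rewrite mulrDl -!mulrA.
under eq_bigr do under eq_bigr do rewrite big_split /= -!mulr_sumr.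
under eq_bigr do rewrite big_split /= -!mulr_sumr.
by rewrite big_split /= -!mulr_sumr !sum3_ind.
Qed.

Lemma e12h3 s (i1 i2 i3 k1 k2 k3 : 'I_N) :
  ent3 (R12_h3 s) i1 i2 i3 k1 k2 k3 =
  alpha (shift s i3) i1 i2 * ind3 i1 i2 i3 k1 k2 k3
  + beta (shift s i3) i1 i2 * ind3 i2 i1 i3 k1 k2 k3.
Proof. rewrite ent3_mk3 Rent /ind3 !natr_and [i3 == k3]eq_sym; ring. Qed.

Lemma e12 s (i1 i2 i3 k1 k2 k3 : 'I_N) :
  ent3 (R12 s) i1 i2 i3 k1 k2 k3 =
  alpha s i1 i2 * ind3 i1 i2 i3 k1 k2 k3 + beta s i1 i2 * ind3 i2 i1 i3 k1 k2 k3.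
Proof. rewrite ent3_mk3 Rent /ind3 !natr_and [i3 == k3]eq_sym; ring. Qed.

Lemma e13 s (i1 i2 i3 k1 k2 k3 : 'I_N) :
  ent3 (R13 s) i1 i2 i3 k1 k2 k3 =
  alpha s i1 i3 * ind3 i1 i2 i3 k1 k2 k3 + beta s i1 i3 * ind3 i3 i2 i1 k1 k2 k3.
Proof. rewrite ent3_mk3 Rent /ind3 !natr_and [i2 == k2]eq_sym; ring. Qed.

Lemma e13h2 s (i1 i2 i3 k1 k2 k3 : 'I_N) :
  ent3 (R13_h2 s) i1 i2 i3 k1 k2 k3 =
  alpha (shift s i2) i1 i3 * ind3 i1 i2 i3 k1 k2 k3
  + beta (shift s i2) i1 i3 * ind3 i3 i2 i1 k1 k2 k3.
Proof. rewrite ent3_mk3 Rent /ind3 !natr_and [i2 == k2]eq_sym; ring. Qed.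

Lemma e23 s (i1 i2 i3 k1 k2 k3 : 'I_N) :
  ent3 (R23 s) i1 i2 i3 k1 k2 k3 =
  alpha s i2 i3 * ind3 i1 i2 i3 k1 k2 k3 + beta s i2 i3 * ind3 i1 i3 i2 k1 k2 k3.
Proof. rewrite ent3_mk3 Rent /ind3 !natr_and [i1 == k1]eq_sym; ring. Qed.

Lemma e23h1 s (i1 i2 i3 k1 k2 k3 : 'I_N) :
  ent3 (R23_h1 s) i1 i2 i3 k1 k2 k3 =
  alpha (shift s i1) i2 i3 * ind3 i1 i2 i3 k1 k2 k3
  + beta (shift s i1) i2 i3 * ind3 i1 i3 i2 k1 k2 k3.
Proof. rewrite ent3_mk3 Rent /ind3 !natr_and [i1 == k1]eq_sym; ring. Qed.

Local Opaque R12 R13 R23 R12_h3 R13_h2 R23_h1 Rmat.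

Lemma triple_ent (A B D : Op3 C N) i1 i2 i3 j1 j2 j3 :
  ent3 (A *m B *m D) i1 i2 i3 j1 j2 j3 =
  \sum_k1 \sum_k2 \sum_k3 ent3 A i1 i2 i3 k1 k2 k3 *
     ent3 (B *m D) k1 k2 k3 j1 j2 j3.
Proof. by rewrite -mulmxA ent3_mul. Qed.

Lemma pairL s k1 k2 k3 j1 j2 j3 :
  ent3 (R13 s *m R23_h1 s) k1 k2 k3 j1 j2 j3 =
  alpha s k1 k3 * (alpha (shift s k1) k2 k3 * ind3 k1 k2 k3 j1 j2 j3
                        + beta (shift s k1) k2 k3 * ind3 k1 k3 k2 j1 j2 j3)
  + beta s k1 k3 * (alpha (shift s k3) k2 k1 * ind3 k3 k2 k1 j1 j2 j3
                        + beta (shift s k3) k2 k1 * ind3 k3 k1 k2 j1 j2 j3).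
Proof.
rewrite ent3_mul; under eq_bigr do under eq_bigr do under eq_bigr do rewrite e13.
 rewrite act3 !e23h1. done.
Qed.

Lemma pairR s k1 k2 k3 j1 j2 j3 :
  ent3 (R13_h2 s *m R12 s) k1 k2 k3 j1 j2 j3 =
  alpha (shift s k2) k1 k3 * (alpha s k1 k2 * ind3 k1 k2 k3 j1 j2 j3
                        + beta s k1 k2 * ind3 k2 k1 k3 j1 j2 j3)
  + beta (shift s k2) k1 k3 * (alpha s k3 k2 * ind3 k3 k2 k1 j1 j2 j3
                        + beta s k3 k2 * ind3 k2 k3 k1 j1 j2 j3).
Proof.
rewrite ent3_mul; under eq_bigr do under eq_bigr do under eq_bigr do rewrite e13h2.
by rewrite act3 !e12.
Qed.

Lemma DYBE_red s :
  (forall i1 i2 i3 j1 j2 j3 : 'I_N,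
    alpha (shift s i3) i1 i2 *
      (alpha s i1 i3 * (alpha (shift s i1) i2 i3 * ind3 i1 i2 i3 j1 j2 j3
                        + beta (shift s i1) i2 i3 * ind3 i1 i3 i2 j1 j2 j3)
       + beta s i1 i3 * (alpha (shift s i3) i2 i1 * ind3 i3 i2 i1 j1 j2 j3
                        + beta (shift s i3) i2 i1 * ind3 i3 i1 i2 j1 j2 j3))
    + beta (shift s i3) i1 i2 *
      (alpha s i2 i3 * (alpha (shift s i2) i1 i3 * ind3 i2 i1 i3 j1 j2 j3
                        + beta (shift s i2) i1 i3 * ind3 i2 i3 i1 j1 j2 j3)
       + beta s i2 i3 * (alpha (shift s i3) i1 i2 * ind3 i3 i1 i2 j1 j2 j3
                        + beta (shift s i3) i1 i2 * ind3 i3 i2 i1 j1 j2 j3))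
  = alpha s i2 i3 *
      (alpha (shift s i2) i1 i3 * (alpha s i1 i2 * ind3 i1 i2 i3 j1 j2 j3
                        + beta s i1 i2 * ind3 i2 i1 i3 j1 j2 j3)
       + beta (shift s i2) i1 i3 * (alpha s i3 i2 * ind3 i3 i2 i1 j1 j2 j3
                        + beta s i3 i2 * ind3 i2 i3 i1 j1 j2 j3))
    + beta s i2 i3 *
      (alpha (shift s i3) i1 i2 * (alpha s i1 i3 * ind3 i1 i3 i2 j1 j2 j3
                        + beta s i1 i3 * ind3 i3 i1 i2 j1 j2 j3)
       + beta (shift s i3) i1 i2 * (alpha s i2 i3 * ind3 i2 i3 i1 j1 j2 j3
                        + beta s i2 i3 * ind3 i3 i2 i1 j1 j2 j3))) ->
  R12_h3 s *m R13 s *m R23_h1 s = R23 s *m R13_h2 s *m R12 s.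
Proof.
move=> H; apply: ent3_ext => i1 i2 i3 j1 j2 j3.

rewrite triple_ent.
rewrite [RHS]triple_ent.
under eq_bigr do under eq_bigr do under eq_bigr do rewrite pairL.
under eq_bigr do under eq_bigr do under eq_bigr do rewrite e12h3.
rewrite act3.
under eq_bigr do under eq_bigr do under eq_bigr do rewrite pairR.
under eq_bigr do under eq_bigr do under eq_bigr do rewrite e23.
rewrite [RHS]act3.
exact: H.
Qed.

End Dsec.
Arguments ind3 {C N} a1 a2 a3 k1 k2 k3.

Section Esec.
Variable C : fieldType.
Hypothesis char0 : forall n : nat, (n.+1)%:R != 0 :> C.
Variable n : nat.
Local Notation N := n.+2.
Implicit Types (s : 'I_(N.-1) -> C).

Lemma alpha_same s (a : 'I_N) : alpha s a a = 1.
Proof. by rewrite /alpha ltnn subrr expr0n /= invr0 mulr0 subr0. Qed.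
Lemma beta_same s (a : 'I_N) : beta s a a = 0.
Proof. by rewrite /beta subrr invr0 mulr0. Qed.



Lemma nz0 s (gen : generic s) (a b : 'I_N) : a != b -> xcoord s a - xcoord s b != 0.
Proof. by move=> H; rewrite subr_eq0; apply: gen.1. Qed.

Lemma nzP s (gen : generic s) (a b : 'I_N) : a != b -> xcoord s a - xcoord s b + 2 != 0.
Proof.
move=> H; have := gen.2 a a b H; rewrite -subr_eq0 (@xdiff C char0 n) eqxx.
by rewrite [b == a]eq_sym (negbTE H) /= ?mulr1n ?mulr0n mulr1 mulr0 subr0.
Qed.

Lemma nzM s (gen : generic s) (a b : 'I_N) : a != b -> xcoord s a - xcoord s b - 2 != 0.
Proof.
move=> H; have := gen.2 b a b H; rewrite -subr_eq0 (@xdiff C char0 n) eqxx.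
by rewrite (negbTE H) /= ?mulr1n ?mulr0n mulr1 mulr0 addr0.
Qed.

Lemma ident s (gen : generic s) (i1 i2 i3 j1 j2 j3 : 'I_N) :
    alpha (shift s i3) i1 i2 *
      (alpha s i1 i3 * (alpha (shift s i1) i2 i3 * ind3 i1 i2 i3 j1 j2 j3
                        + beta (shift s i1) i2 i3 * ind3 i1 i3 i2 j1 j2 j3)
       + beta s i1 i3 * (alpha (shift s i3) i2 i1 * ind3 i3 i2 i1 j1 j2 j3
                        + beta (shift s i3) i2 i1 * ind3 i3 i1 i2 j1 j2 j3))
    + beta (shift s i3) i1 i2 *
      (alpha s i2 i3 * (alpha (shift s i2) i1 i3 * ind3 i2 i1 i3 j1 j2 j3
                        + beta (shift s i2) i1 i3 * ind3 i2 i3 i1 j1 j2 j3)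
       + beta s i2 i3 * (alpha (shift s i3) i1 i2 * ind3 i3 i1 i2 j1 j2 j3
                        + beta (shift s i3) i1 i2 * ind3 i3 i2 i1 j1 j2 j3))
  = alpha s i2 i3 *
      (alpha (shift s i2) i1 i3 * (alpha s i1 i2 * ind3 i1 i2 i3 j1 j2 j3
                        + beta s i1 i2 * ind3 i2 i1 i3 j1 j2 j3)
       + beta (shift s i2) i1 i3 * (alpha s i3 i2 * ind3 i3 i2 i1 j1 j2 j3
                        + beta s i3 i2 * ind3 i2 i3 i1 j1 j2 j3))
    + beta s i2 i3 *
      (alpha (shift s i3) i1 i2 * (alpha s i1 i3 * ind3 i1 i3 i2 j1 j2 j3
                        + beta s i1 i3 * ind3 i3 i1 i2 j1 j2 j3)
       + beta (shift s i3) i1 i2 * (alpha s i2 i3 * ind3 i2 i3 i1 j1 j2 j3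
                        + beta s i2 i3 * ind3 i3 i2 i1 j1 j2 j3)).
Proof.
case: (ltngtP i1 i2) => [h12|h12|/val_inj e12]; [| | subst i2];
  case: (ltngtP i1 i3) => [h13|h13|/val_inj e13]; try subst i3;
  try (case: (ltngtP i2 i3) => [h23|h23|/val_inj e23]; try subst i3);
  try (exfalso; lia).
all: rewrite ?alpha_same ?beta_same.
all: rewrite /alpha /beta ?(@xdiff C char0 n).
all: lia_bool; ord_bool.
all: rewrite /= ?mulr0n ?mulr1n ?mulr0 ?mulr1 ?addr0 ?subr0.
all: field.
all: repeat (apply/andP; split).
all: try by [].
all: first [ apply: nz0 gen _ _ _ | apply: nzP gen _ _ _ | apply: nzM gen _ _ _ ];
  apply/eqP => E; move: E => /(congr1 val) /=; lia.
Qed.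

End Esec.

Local Open Scope complex_scope.

Theorem mainTheorem1 (R : realType) (N : nat) (hN : (2 <= N)%N)
    (s : 'I_(N.-1) -> R[i]) (hs : generic s) :
  let x := xcoord s in
  let Rs := Rmat s in
  (forall i1 i2 j1 j2 : 'I_N,
      ~~ (((i1 == j1) && (i2 == j2)) || ((i1 == j2) && (i2 == j1))) ->
      ent2 Rs i1 i2 j1 j2 = 0) /\
  (forall a : 'I_N, ent2 Rs a a a a = 1) /\
  (forall a b : 'I_N, a != b ->
      ent2 Rs a b a b =
        (if (a < b)%N then 1 else 1 - 4 / (x a - x b) ^+ 2)) /\
  (forall a b : 'I_N, a != b -> ent2 Rs a b b a = 2 / (x a - x b)) /\
  R12_h3 s *m R13 s *m R23_h1 s = R23 s *m R13_h2 s *m R12 s.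
Proof.
move=> x Rs; rewrite /x /Rs {x Rs}.
have char0 : forall k : nat, (k.+1)%:R != 0 :> R[i] by move=> k; rewrite pnatr_eq0.
split; [|split; [|split; [|split]]].
- move=> i1 i2 j1 j2 H; rewrite Rent; move: H.
  rewrite [j1 == i1]eq_sym [j2 == i2]eq_sym [j1 == i2]eq_sym [j2 == i1]eq_sym.
  case/norP => /negbTE -> H2; rewrite (_ : (i2 == j1) && (i1 == j2) = false).
    by rewrite /= !mulr0n !mulr0 addr0.
  by apply/negbTE; rewrite andbC.
- move=> a; rewrite Rent eqxx /= mulr1n !mulr1 /alpha /beta ltnn subrr expr0n /= invr0.
  by rewrite !mulr0 subr0 addr0.
- move=> a b H; rewrite Rent !eqxx [b == a]eq_sym (negbTE H) /= mulr1n mulr0n mulr1 mulr0 addr0.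
  by [].
- move=> a b H; rewrite Rent !eqxx [b == a]eq_sym (negbTE H) /= mulr1n mulr0n mulr1 mulr0 add0r.
  by [].
- move: N hN s hs; case=> [|[|n]] // _ s hs.
  apply: DYBE_red => i1 i2 i3 j1 j2 j3; have := @ident _ char0 n s hs i1 i2 i3 j1 j2 j3. exact.
Qed.
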